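(* Let $\psi,\psi_1,\psi_2,\dots$ be Archimedean generators with pseudo-inverses $\varphi,\varphi_1,\varphi_2,\dots$. Then $(\varphi_n)$ converges pointwise to $\varphi$ on $(0,1]$ if and only if $(\psi_n)$ converges uniformly to $\psi$ on $[0,\infty)$.
   Context: An Archimedean generator is a continuous non-increasing $\psi:[0,\infty)\to[0,1]$ with $\psi(0)=1$, $\lim_{z\to\infty}\psi(z)=0$, strictly decreasing on $[0,\inf\{z\in[0,\infty]:\psi(z)=0\}]$ (with $\inf\emptyset=\infty$), normalized so that $\psi(1)=1/2$. Its pseudo-inverse is $\varphi:[0,1]\to[0,\infty]$, $\varphi(y)=\inf\{z\in[0,\infty]:\psi(z)=y\}$. *)

(* Defs.v *)
From Stdlib Require Import Reals.
From Coquelicot Require Import Coquelicot.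
Open Scope R_scope.

(* Archimedean generator psi : [0,oo) -> [0,1], represented as psi : R -> R
   whose values outside [0,oo) are irrelevant. *)

(* zero of psi: inf { z in [0,oo) | psi z = 0 } in [0,oo] (inf of empty = +oo) *)
Definition gen_zero (psi : R -> R) : Rbar :=
  Glb_Rbar (fun z => 0 <= z /\ psi z = 0).

Definition archimedean_generator (psi : R -> R) : Prop :=
  (forall z, 0 <= z ->
     filterlim psi (within (fun t => 0 <= t) (locally z)) (locally (psi z))) /\
  (forall z, 0 <= z -> 0 <= psi z <= 1) /\
  (forall x y, 0 <= x -> x <= y -> psi y <= psi x) /\
  psi 0 = 1 /\
  is_lim psi p_infty 0 /\
  (forall x y, 0 <= x -> x < y -> Rbar_le y (gen_zero psi) -> psi y < psi x) /\
  psi 1 = 1/2.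

(* pseudo-inverse phi(y) = inf { z in [0,oo] | psi z = y } in [0,oo].
   Including the point +oo (where psi = 0 by convention) does not change the
   infimum, so it suffices to take the infimum over [0,oo) (inf empty = +oo). *)
Definition pseudo_inverse (psi : R -> R) (y : R) : Rbar :=
  Glb_Rbar (fun z => 0 <= z /\ psi z = y).

Definition unif_conv_nonneg (f : nat -> R -> R) (g : R -> R) : Prop :=
  forall eps : R, 0 < eps -> exists N : nat,
    forall n : nat, (N <= n)%nat -> forall z : R, 0 <= z -> Rabs (f n z - g z) < eps.

(* Main.v *)
Require Import Defs.
From Stdlib Require Import Reals Lra Lia Classical ZArith.
From Coquelicot Require Import Coquelicot.
Open Scope R_scope.

Lemma ag_cont g z : archimedean_generator g -> 0 <= z -> forall eps, 0 < eps ->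
  exists d, 0 < d /\ forall t, 0 <= t -> Rabs (t - z) < d -> Rabs (g t - g z) < eps.
Proof.
  intros [Hc _] Hz eps He.
  destruct (proj1 (filterlim_locally _ _) (Hc z Hz) (mkposreal eps He)) as [d Hd].
  exists d; split; [apply cond_pos|]. intros t Ht Htz. apply (Hd t Htz Ht).
Qed.

Lemma ag_inf g eps : archimedean_generator g -> 0 < eps ->
  exists M, forall t, M < t -> g t < eps.
Proof.
  intros (_&_&_&_&Hl&_) He.
  apply is_lim_spec in Hl. destruct (Hl (mkposreal eps He)) as [M HM].
  exists M. intros t Ht. specialize (HM t Ht). simpl in HM.
  rewrite Rminus_0_r in HM. apply Rabs_def2 in HM. lra.
Qed.

Lemma ag_beyond g t : archimedean_generator g -> 0 <= t ->
  ~ Rbar_le t (gen_zero g) -> g t = 0.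
Proof.
  intros Hg Ht Hn. destruct Hg as (_&Hb&Hm&_).
  destruct (classic (exists s, 0 <= s /\ g s = 0 /\ s < t)) as [[s (Hs1&Hs2&Hs3)]|Hno].
  - specialize (Hm s t Hs1 (Rlt_le _ _ Hs3)). specialize (Hb t Ht). lra.
  - exfalso. apply Hn. unfold gen_zero. apply (proj2 (Glb_Rbar_correct _)).
    intros s [Hs1 Hs2]. simpl. destruct (Rle_dec t s) as [|Hl]; auto.
    exfalso; apply Hno; exists s; repeat split; auto; lra.
Qed.

Lemma ag_strict g x t : archimedean_generator g -> 0 <= x -> x < t -> 0 < g x -> g t < g x.
Proof.
  intros Hg Hx Hxt Hp.
  destruct (classic (Rbar_le t (gen_zero g))) as [H|H].
  - destruct Hg as (_&_&_&_&_&Hs&_). apply Hs; auto.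
  - rewrite (ag_beyond g t Hg) ; auto; lra.
Qed.

Lemma ag_mono g x y : archimedean_generator g -> 0 <= x -> x <= y -> g y <= g x.
Proof. intros (_&_&Hm&_) ; apply Hm. Qed.

Lemma ag_pinv g y : archimedean_generator g -> 0 < y <= 1 ->
  exists p, pseudo_inverse g y = Finite p /\ 0 <= p /\ g p = y /\
    (forall t, 0 <= t -> g t = y -> p <= t).
Proof.
  intros Hg Hy.
  assert (Hmin : forall p, 0 <= p -> g p = y -> (forall t, 0 <= t -> g t = y -> p <= t) ->
     exists p, pseudo_inverse g y = Finite p /\ 0 <= p /\ g p = y /\
    (forall t, 0 <= t -> g t = y -> p <= t)).
  { intros p H1 H2 H3. exists p; repeat split; auto.
    unfold pseudo_inverse. apply is_glb_Rbar_unique. split.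
    - intros s [Hs1 Hs2]. simpl. auto.
    - intros b Hb. apply (Hb p). auto. }
  assert (Hg0 : g 0 = 1) by (destruct Hg as (_&_&_&H&_); auto).
  destruct (Req_dec y 1) as [Hy1|Hy1].
  { apply (Hmin 0); [lra| congruence |]. intros; auto. }
  destruct (ag_inf g y Hg (proj1 Hy)) as [M HM].
  set (A := fun t => 0 <= t /\ y < g t).
  assert (HA : forall t, A t -> t <= Rmax M 0).
  { intros t [Ht1 Ht2]. destruct (Rle_dec t (Rmax M 0)) as [|Hn]; auto.
    exfalso. assert (M < t) by (pose proof (Rmax_l M 0); lra).
    specialize (HM t H). lra. }
  destruct (completeness A) as [p [Hub Hlub]].
  { exists (Rmax M 0). intros t Ht. auto. }
  { exists 0. split; lra. }
  assert (Hp0 : 0 <= p). { apply Hub. split; lra. }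
  assert (Hgp : g p = y).
  { destruct (Rtotal_order (g p) y) as [Hlt|[Heq|Hgt]]; auto; exfalso.
    - destruct (ag_cont g p Hg Hp0 (y - g p)) as [d [Hd Hd']]; [lra|].
      assert (Hb : is_upper_bound A (p - d/2)).
      { intros a [Ha1 Ha2]. destruct (Rle_dec a (p - d/2)) as [|Hn]; auto.
        exfalso. assert (a <= p) by (apply Hub; split; auto).
        assert (Rabs (g a - g p) < y - g p) by (apply Hd'; auto; rewrite Rabs_left1; lra).
        apply Rabs_def2 in H0. lra. }
      specialize (Hlub _ Hb). lra.
    - destruct (ag_cont g p Hg Hp0 (g p - y)) as [d [Hd Hd']]; [lra|].
      assert (A (p + d/2)).
      { split; [lra|]. specialize (Hd' (p + d/2)).
        assert (Rabs (g (p + d / 2) - g p) < g p - y) by (apply Hd'; [lra| rewrite Rabs_right; lra]).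
        apply Rabs_def2 in H. lra. }
      specialize (Hub _ H). lra. }
  apply (Hmin p); auto.
  intros t Ht Hgt. destruct (Rle_dec p t) as [|Hn]; auto. exfalso.
  assert (Hb : is_upper_bound A t).
  { intros a [Ha1 Ha2]. destruct (Rle_dec a t) as [|Hn']; auto.
    exfalso. pose proof (ag_mono g t a Hg Ht). lra. }
  specialize (Hlub _ Hb). lra.
Qed.

Lemma dir_back psi psis : archimedean_generator psi ->
  (forall n : nat, archimedean_generator (psis n)) ->
  unif_conv_nonneg psis psi ->
  forall y : R, 0 < y <= 1 ->
      is_lim_seq (fun n => real (pseudo_inverse (psis n) y))
                 (pseudo_inverse psi y).
Proof.
  intros Hg Hgs Hu y Hy.
  destruct (ag_pinv psi y Hg Hy) as (z & Hz & Hz0 & Hgz & Hzm).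
  rewrite Hz. apply is_lim_seq_spec. intros [eps He]. simpl.
  assert (Hup : eventually (fun n => real (pseudo_inverse (psis n) y) < z + eps)).
  { assert (Hs : psi (z + eps/2) < psi z) by (apply ag_strict; auto; lra).
    destruct (Hu (y - psi (z + eps/2))) as [N HN]; [lra|].
    exists N. intros n Hn.
    destruct (ag_pinv (psis n) y (Hgs n) Hy) as (p & Hp & Hp0 & Hgp & Hpm).
    rewrite Hp; simpl.
    specialize (HN n Hn (z + eps/2) ltac:(lra)). apply Rabs_def2 in HN.
    destruct (Rlt_dec p (z + eps/2)) as [|Hn']; [lra|]. exfalso.
    pose proof (ag_mono (psis n) (z + eps/2) p (Hgs n) ltac:(lra) ltac:(lra)). lra. }
  assert (Hlo : eventually (fun n => z - eps < real (pseudo_inverse (psis n) y))).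
  { destruct (Rlt_dec z eps) as [Hlt|Hge].
    - exists 0%nat. intros n _.
      destruct (ag_pinv (psis n) y (Hgs n) Hy) as (p & Hp & Hp0 & Hgp & Hpm).
      rewrite Hp; simpl. lra.
    - pose proof (ag_mono psi (z - eps/2) z Hg ltac:(lra) ltac:(lra)).
      assert (Hs : psi z < psi (z - eps/2)) by (apply ag_strict; auto; lra).
      destruct (Hu (psi (z - eps/2) - y)) as [N HN]; [lra|].
      exists N. intros n Hn.
      destruct (ag_pinv (psis n) y (Hgs n) Hy) as (p & Hp & Hp0 & Hgp & Hpm).
      rewrite Hp; simpl.
      specialize (HN n Hn (z - eps/2) ltac:(lra)). apply Rabs_def2 in HN.
      destruct (Rlt_dec (z - eps/2) p) as [|Hn']; [lra|]. exfalso.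
      pose proof (ag_mono (psis n) p (z - eps/2) (Hgs n) ltac:(lra) ltac:(lra)). lra. }
  destruct Hup as [N1 H1]. destruct Hlo as [N2 H2]. exists (Nat.max N1 N2).
  intros n Hn. specialize (H1 n ltac:(lia)). specialize (H2 n ltac:(lia)).
  apply Rabs_def1; lra.
Qed.

Lemma ev_all (Q : nat -> nat -> Prop) m :
  (forall k, (k <= m)%nat -> eventually (Q k)) ->
  eventually (fun n => forall k, (k <= m)%nat -> Q k n).
Proof.
  induction m as [|m IH]; intros H.
  - destruct (H 0%nat (le_n 0)) as [N HN]. exists N. intros n Hn k Hk.
    assert (k = 0%nat) by lia. subst. auto.
  - destruct (IH (fun k Hk => H k ltac:(lia))) as [N1 H1].
    destruct (H (S m) (le_n _)) as [N2 H2].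
    exists (Nat.max N1 N2). intros n Hn k Hk.
    destruct (Nat.eq_dec k (S m)) as [->|Hne].
    + apply H2; lia.
    + apply H1; lia.
Qed.

Lemma dir_fwd psi psis : archimedean_generator psi ->
  (forall n : nat, archimedean_generator (psis n)) ->
  (forall y : R, 0 < y <= 1 ->
      is_lim_seq (fun n => real (pseudo_inverse (psis n) y))
                 (pseudo_inverse psi y)) ->
  unif_conv_nonneg psis psi.
Proof.
  intros Hg Hgs Hl eps He.
  destruct (archimed (2/eps)) as [Ha1 _].
  assert (H2e : 0 < 2/eps) by (apply Rdiv_lt_0_compat; lra).
  assert (Hup0 : (0 < up (2/eps))%Z) by (apply lt_IZR; lra).
  set (m := S (Z.to_nat (up (2/eps)))).
  assert (HmR : INR m = IZR (up (2/eps)) + 1).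
  { unfold m. rewrite S_INR, INR_IZR_INZ, Z2Nat.id by lia. auto. }
  assert (Hm0 : 0 < INR m) by (rewrite HmR; apply IZR_lt in Hup0; lra).
  set (im := / INR m).
  assert (Him : INR m * im = 1) by (unfold im; field; lra).
  assert (Him0 : 0 < im) by (unfold im; apply Rinv_0_lt_compat; lra).
  assert (H2m : 2 * im < eps).
  { assert (2 < eps * INR m).
    { apply (Rmult_lt_compat_r eps) in Ha1; [|lra].
      replace (2 / eps * eps) with 2 in Ha1 by (field; lra). nra. }
    nra. }
  set (lv := fun k : nat => INR k * im).
  assert (Hlv : forall k, (1 <= k <= m)%nat -> 0 < lv k <= 1).
  { intros k Hk. unfold lv. assert (1 <= INR k) by (apply (le_INR 1); lia).
    assert (INR k <= INR m) by (apply le_INR; lia). split; nra. }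
  set (phi := fun k => real (pseudo_inverse psi (lv k))).
  set (ph := fun n k => real (pseudo_inverse (psis n) (lv k))).
  assert (Hphi : forall k, (1 <= k <= m)%nat -> 0 <= phi k /\ psi (phi k) = lv k).
  { intros k Hk. destruct (ag_pinv psi (lv k) Hg (Hlv k Hk)) as (p & Hp & Hp0 & Hgp & _).
    unfold phi; rewrite Hp; simpl; auto. }
  assert (Hph : forall n k, (1 <= k <= m)%nat -> 0 <= ph n k /\ psis n (ph n k) = lv k).
  { intros n k Hk. destruct (ag_pinv (psis n) (lv k) (Hgs n) (Hlv k Hk)) as (p & Hp & Hp0 & Hgp & _).
    unfold ph; rewrite Hp; simpl; auto. }
  assert (Hord : forall k, (1 <= k)%nat -> (k + 1 <= m)%nat -> phi (k+1)%nat < phi k).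
  { intros k H1 H2. destruct (Hphi k ltac:(lia)) as [Ha Hb].
    destruct (Hphi (k+1)%nat ltac:(lia)) as [Hc Hd].
    destruct (Rlt_dec (phi (k+1)%nat) (phi k)) as [|Hn]; auto. exfalso.
    pose proof (ag_mono psi (phi k) (phi (k+1)%nat) Hg Ha ltac:(lra)).
    rewrite Hb, Hd in H. unfold lv in H. rewrite plus_INR in H. simpl in H. nra. }
  assert (Hconv : forall k, (1 <= k <= m)%nat -> forall d, 0 < d ->
     eventually (fun n => Rabs (ph n k - phi k) < d)).
  { intros k Hk d Hd. destruct (ag_pinv psi (lv k) Hg (Hlv k Hk)) as (p & Hp & _).
    specialize (Hl (lv k) (Hlv k Hk)). rewrite Hp in Hl.
    apply is_lim_seq_spec in Hl. destruct (Hl (mkposreal d Hd)) as [N HN].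
    exists N. intros n Hn. specialize (HN n Hn). unfold ph, phi. rewrite Hp. exact HN. }
  set (Q := fun k n => (1 <= k <= m)%nat ->
     ((2 <= k)%nat -> ph n k < phi (k-1)%nat) /\ ((k+1 <= m)%nat -> phi (k+1)%nat < ph n k)).
  destruct (ev_all Q m) as [N HN].
  { intros k _. destruct (le_dec 1 k) as [Hk1|Hk1]; [destruct (le_dec k m) as [Hk2|Hk2]|].
    2,3: exists 0%nat; intros n _ Hk; lia.
    assert (Hd1 : 0 < (if le_dec 2 k then phi (k-1)%nat - phi k else 1)).
    { destruct (le_dec 2 k); [|lra].
      pose proof (Hord (k-1)%nat ltac:(lia) ltac:(lia)).
      replace (k - 1 + 1)%nat with k in H by lia. lra. }
    assert (Hd2 : 0 < (if le_dec (k+1) m then phi k - phi (k+1)%nat else 1)).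
    { destruct (le_dec (k+1) m); [|lra]. pose proof (Hord k ltac:(lia) ltac:(lia)). lra. }
    destruct (Hconv k ltac:(lia) _ Hd1) as [N1 H1].
    destruct (Hconv k ltac:(lia) _ Hd2) as [N2 H2].
    exists (Nat.max N1 N2). intros n Hn _. specialize (H1 n ltac:(lia)). specialize (H2 n ltac:(lia)).
    apply Rabs_def2 in H1. apply Rabs_def2 in H2. split.
    - intros Hk. destruct (le_dec 2 k); [lra|lia].
    - intros Hk. destruct (le_dec (k+1) m); [lra|lia]. }
  exists N. intros n Hn z Hz. specialize (HN n Hn).
  set (x := psi z * INR m).
  assert (Hpx : psi z = x * im) by (unfold x; rewrite Rmult_assoc, Him; ring).
  destruct (archimed x) as [Hk1 Hk2].
  set (k0 := up x) in *.
  assert (Hbz : 0 <= psi z <= 1) by (destruct Hg as (_&Hb&_); auto).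
  assert (Hbn : 0 <= psis n z <= 1) by (destruct (Hgs n) as (_&Hb&_); auto).
  assert (Hx0 : 0 <= x) by (unfold x; nra).
  assert (Hk00 : (0 < k0)%Z) by (apply lt_IZR; lra).
  set (k := Z.to_nat k0).
  assert (HkR : INR k = IZR k0) by (unfold k; rewrite INR_IZR_INZ, Z2Nat.id by lia; auto).
  assert (Hupper : psis n z <= (IZR k0 + 1) * im).
  { destruct (Rle_dec (INR m) (IZR k0)) as [Hge|Hlt].
    - nra.
    - assert (Hkm : (k < m)%nat) by (apply INR_lt; lra).
      assert (Hk1' : (1 <= k)%nat) by lia.
      destruct (Hphi k ltac:(lia)) as [Hp1 Hp2].
      assert (Hzk : phi k < z).
      { destruct (Rlt_dec (phi k) z) as [|Hn']; auto. exfalso.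
        pose proof (ag_mono psi z (phi k) Hg Hz ltac:(lra)).
        rewrite Hp2 in H. unfold lv in H. rewrite HkR in H. nra. }
      destruct (HN (k+1)%nat ltac:(lia) ltac:(lia)) as [Hq _].
      specialize (Hq ltac:(lia)). replace (k + 1 - 1)%nat with k in Hq by lia.
      destruct (Hph n (k+1)%nat ltac:(lia)) as [Hq1 Hq2].
      pose proof (ag_mono (psis n) (ph n (k+1)%nat) z (Hgs n) Hq1 ltac:(lra)).
      rewrite Hq2 in H. unfold lv in H. rewrite plus_INR, HkR in H. simpl in H. lra. }
  assert (Hlower : (IZR k0 - 2) * im <= psis n z).
  { destruct (Rle_dec (IZR k0) 2) as [Hle|Hgt].
    - nra.
    - assert (Hk3 : (3 <= k)%nat).
      { assert (IZR 2 < IZR k0) by lra. apply lt_IZR in H. unfold k. lia. }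
      set (j := (k - 1)%nat).
      assert (HjR : INR j = IZR k0 - 1) by (unfold j; rewrite minus_INR by lia; rewrite HkR; simpl; ring).
      assert (Hjm : (j <= m)%nat).
      { apply INR_le. assert (INR j * im <= 1) by nra.
        apply (Rmult_le_compat_r (INR m)) in H; [|lra].
        rewrite Rmult_assoc, (Rmult_comm im), Him in H. lra. }
      destruct (Hphi j ltac:(lia)) as [Hp1 Hp2].
      assert (Hzj : z <= phi j).
      { destruct (Rle_dec z (phi j)) as [|Hn']; auto. exfalso.
        assert (0 < psi (phi j)) by (rewrite Hp2; apply Hlv; lia).
        pose proof (ag_strict psi (phi j) z Hg Hp1 ltac:(lra) H).
        rewrite Hp2 in H0. unfold lv in H0. rewrite HjR in H0. nra. }
      destruct (HN (j-1)%nat ltac:(lia) ltac:(lia)) as [_ Hq].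
      specialize (Hq ltac:(lia)). replace (j - 1 + 1)%nat with j in Hq by lia.
      destruct (Hph n (j-1)%nat ltac:(lia)) as [Hq1 Hq2].
      pose proof (ag_mono (psis n) z (ph n (j-1)%nat) (Hgs n) Hz ltac:(lra)).
      rewrite Hq2 in H. unfold lv in H. rewrite minus_INR, HjR in H by lia. simpl in H. lra. }
  apply Rabs_def1; nra.
Qed.

Theorem lemma4p3 (psi : R -> R) (psis : nat -> R -> R) :
  archimedean_generator psi ->
  (forall n : nat, archimedean_generator (psis n)) ->
  ((forall y : R, 0 < y <= 1 ->
      is_lim_seq (fun n => real (pseudo_inverse (psis n) y))
                 (pseudo_inverse psi y))
   <-> unif_conv_nonneg psis psi).
Proof.
  intros Hg Hgs. split.
  - apply dir_fwd; auto.
  - apply dir_back; auto.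
Qed.
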